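(* Suppose each $f_v$ is $K_v$-Lipschitz and let $\bar K=\frac1{rn}\sum_vK_v$. If $\mathcal P$ is sampled uniformly from all partitions of $V(G)$ into $n$ (ordered) sets of size $r$ and $T=T_{\vec B,\mathcal P}$ with $\vec B$ independent of $\mathcal P$, then $$\mathbb E_{\mathcal P}\big|\mathbb E_{\vec B}(\xi\mid\mathcal P)\big|\le\frac{\bar K}{rn-1}.$$
   Context: Let $n,p,q$ be positive integers, $r=p+q$, $G$ a finite simple graph with $|V(G)|=rn$ and no isolated vertices; $\mathcal N(v)$, $d(v)$ neighbor set and degree. For each $v$, $f_v:2^{\mathcal N(v)}\to\mathbb R$ with $f_v(\emptyset)=0$. $\sigma_T(v)=q$ if $v\in T$, $-p$ otherwise; for $|T|=pn$, $\xi=\frac1{pqn}\sum_v\sigma_T(v)f_v(T\cap\mathcal N(v))$. $f_v$ is $K_v$-Lipschitz ($K_v>0$) if $|f_v(A)-f_v(A')|\le K_v|A\triangle A'|/d(v)$ for all $A,A'\subseteq\mathcal N(v)$. Restricted randomization: for $\mathcal P=(S_1,\dots,S_n)$, $S_i=\{w_i^1,\dots,w_i^r\}$, $B_i$ i.i.d. uniform $p$-subsets of $\{1,\dots,r\}$, $T_{\vec B,\mathcal P}=\{w_i^j:j\in B_i\}$. *)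

(* Defs.v *)
From HB Require Import structures.
From mathcomp Require Import all_boot all_order all_algebra.
Set Implicit Arguments. Unset Strict Implicit. Unset Printing Implicit Defensive.
Import Order.TTheory GRing.Theory Num.Theory.
Local Open Scope ring_scope.

Section Defs.
Variables (R : realFieldType) (V : finType).

Definition nbhd (e : rel V) (v : V) : {set V} := [set u | e v u].
Definition deg (e : rel V) (v : V) : nat := #|nbhd e v|.

Definition simple_graph (e : rel V) : Prop :=
  (forall u v, e u v = e v u) /\ (forall v, ~~ e v v).
Definition no_isolated (e : rel V) : Prop := forall v, exists u, e v u.

Definition lipschitz (e : rel V) (fv : {set V} -> R) (Kv : R) (v : V) : Prop :=
  forall A A' : {set V}, A \subset nbhd e v -> A' \subset nbhd e v ->
    `|fv A - fv A'| <= Kv * (#|(A :\: A') :|: (A' :\: A)|%:R) / (deg e v)%:R.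

Definition sgn (p q : nat) (T : {set V}) (v : V) : R :=
  if v \in T then q%:R else - (p%:R).

Definition xi (e : rel V) (f : V -> {set V} -> R) (n p q : nat) (T : {set V}) : R :=
  ((p * q * n)%N%:R)^-1 * \sum_(v : V) sgn p q T v * f v (T :&: nbhd e v).

(* a partition P = (S_1..S_n), S_i = {w_i^1..w_i^r}, encoded as a bijection
   w : 'I_n * 'I_r -> V with w (i,j) = w_i^{j+1} *)
Definition partitions (n r : nat) : {set {ffun 'I_n * 'I_r -> V}} :=
  [set w : {ffun 'I_n * 'I_r -> V} | injectiveb w].

Definition Bvecs (n r p : nat) : {set {ffun 'I_n -> {set 'I_r}}} :=
  [set B : {ffun 'I_n -> {set 'I_r}} | [forall i, #|B i| == p]].

Definition Tset (n r : nat) (w : {ffun 'I_n * 'I_r -> V})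
  (B : {ffun 'I_n -> {set 'I_r}}) : {set V} :=
  [set v | [exists i : 'I_n, exists j : 'I_r, (j \in B i) && (w (i, j) == v)]].

Definition EB (e : rel V) (f : V -> {set V} -> R) (n p q : nat)
  (w : {ffun 'I_n * 'I_(p + q) -> V}) : R :=
  ((#|Bvecs n (p + q) p|)%:R)^-1 *
    \sum_(B in Bvecs n (p + q) p) xi e f n p q (Tset w B).

End Defs.

Arguments EB {R V} e f n p q w.
Arguments xi {R V} e f n p q T.
Arguments partitions V n r.
Arguments Bvecs n r p.
Arguments Tset {V n r} w B.

(* Main.v *)
Require Import Defs.
From HB Require Import structures.
From mathcomp Require Import all_boot all_order all_algebra all_fingroup.
From mathcomp Require Import zify ring lra.
Import Order.TTheory GRing.Theory Num.Theory.
Local Open Scope ring_scope.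

Lemma swapK (T : finType) (S : {set T}) a b : a \in S -> b \notin S ->
  (S :\ a :|: [set b]) :\ b :|: [set a] = S.
Proof.
move=> aS bS; apply/setP => x; rewrite !inE.
case: (eqVneq x a) => [->|xa]; first by rewrite aS orbT.
case: (eqVneq x b) => [->|xb] /=; first by rewrite (negbTE bS).
by rewrite !orbF.
Qed.

Lemma swap_mem (T : finType) (S : {set T}) a b : a \in S -> b \notin S ->
  [/\ a \notin (S :\ a :|: [set b]), b \in (S :\ a :|: [set b]) &
      #|S :\ a :|: [set b]| = #|S|].
Proof.
move=> aS bS; have ab : a != b by apply: contraNneq bS => <-.
split.
- by rewrite !inE eqxx /=.
- by rewrite !inE eqxx orbT.
rewrite setUC cardsU1 !inE (negbTE bS) andbF /= [in RHS](cardsD1 a S) aS.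
by [].
Qed.

Arguments swap_mem {T S a b}.
Arguments swapK {T S a b}.

Section Main.
Variables (R : realFieldType) (V : finType) (n p q : nat)
  (e : rel V) (f : V -> {set V} -> R) (K : V -> R).
Hypotheses (Hsym : simple_graph e) (Hiso : no_isolated e)
  (HK : forall v, 0 < K v) (Hlip : forall v, lipschitz e (f v) (K v) v)
  (HV : #|V| = ((p + q) * n)%N).

Local Notation r := (p + q)%N.
Local Notation Pos := ('I_n * 'I_r)%type.

Definition c (x y : V) : R := K x / (deg e x)%:R * (e x y)%:R.

Lemma memT (w : {ffun Pos -> V}) B i j : injective w ->
  (w (i, j) \in Tset w B) = (j \in B i).
Proof.
move=> wi; rewrite inE; apply/existsP/idP => [[i' /existsP [j' /andP [jB /eqP E]]]|jB].
  by case: (wi _ _ E) jB => -> ->.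
by exists i; apply/existsP; exists j; rewrite jB eqxx.
Qed.

Lemma surjw (w : {ffun Pos -> V}) : injective w -> forall x, exists a, w a = x.
Proof.
move=> wi x.
have /codomP [a ->] : x \in codom w.
  by apply: inj_card_onto => //; rewrite card_prod !card_ord HV mulnC.
by exists a.
Qed.

Lemma bijw (w : {ffun Pos -> V}) : injective w -> bijective w.
Proof. by move=> wi; apply: inj_card_bij => //; rewrite card_prod !card_ord HV mulnC. Qed.

Lemma deg_gt0 x : (0 < deg e x)%N.
Proof. by case: (Hiso x) => u exu; apply/card_gt0P; exists u; rewrite inE. Qed.

Lemma sum_c x : \sum_y c x y = K x.
Proof.
rewrite /c -mulr_sumr.
have -> : \sum_y (e x y)%:R = (deg e x)%:R :> R.
  rewrite -natr_sum; congr (_%:R).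
  rewrite /deg /nbhd -sum1dep_card [RHS]big_mkcond /=.
  by apply: eq_bigr => y _; case: (e x y).
have d0 : (deg e x)%:R != 0 :> R by rewrite pnatr_eq0 -lt0n deg_gt0.
by rewrite mulfVK.
Qed.

Lemma c_ge0 x y : 0 <= c x y.
Proof. by rewrite /c !mulr_ge0 ?invr_ge0 ?ler0n // ltW. Qed.

Lemma c_xx x : c x x = 0.
Proof. by rewrite /c (negbTE (Hsym.2 x)) mulr0. Qed.


Definition upd (B : {ffun 'I_n -> {set 'I_r}}) i0 (S : {set 'I_r}) :
  {ffun 'I_n -> {set 'I_r}} := [ffun i => if i == i0 then S else B i].

Lemma lipstep (w : {ffun Pos -> V}) i0 j0 (B : {ffun 'I_n -> {set 'I_r}}) u : injective w ->
  j0 \in B i0 -> u \notin B i0 ->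
  `| f (w (i0, j0)) (Tset w B :&: nbhd e (w (i0, j0)))
     - f (w (i0, j0)) (Tset w (upd B i0 (B i0 :\ j0 :|: [set u]))
                        :&: nbhd e (w (i0, j0))) |
  <= c (w (i0, j0)) (w (i0, u)).
Proof.
move=> wi jB uB.
set v := w (i0, j0).
set A := Tset w B :&: nbhd e v.
set A' := Tset w _ :&: nbhd e v.
have H := Hlip v A A' (subsetIr _ _) (subsetIr _ _).
apply: le_trans H _.
rewrite /c mulrAC ler_wpM2l ?divr_ge0 ?ler0n ?(ltW (HK v)) // ler_nat.
set b := e v (w (i0, u)).
have sub : (A :\: A') :|: (A' :\: A) \subset (if b then [set w (i0, u)] else set0).
  apply/subsetP => y; case: (surjw _ wi y) => [[i1 j1]] <-.
  rewrite !in_setU !in_setD !in_setI !memT // !ffunE.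
  case: (eqVneq i1 i0) => [->|i10] /=; last first.
    by case: (j1 \in B i1) => //=; case: (_ \in nbhd _ _).
  rewrite in_setU in_setD1 in_set1.
  case: (eqVneq j1 j0) => [->|j10] /=.
    by rewrite /v inE (negbTE (Hsym.2 _)) !andbF.
  case: (eqVneq j1 u) => [->|j1u] /=.
    rewrite (negbTE uB) /= andbF /= inE /b => ->.
    by rewrite inE.
  by case: (j1 \in B i0) => //=; case: (_ \in nbhd _ _).
apply: leq_trans (subset_leq_card sub) _.
by rewrite /b; case: (e v _); rewrite ?cards1 ?cards0.
Qed.

Lemma upd_same B i0 S : upd B i0 S i0 = S.
Proof. by rewrite ffunE eqxx. Qed.

Lemma upd_upd B i0 S S' : upd (upd B i0 S) i0 S' = upd B i0 S'.
Proof. by apply/ffunP => i; rewrite !ffunE; case: (i == i0). Qed.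

Lemma upd_id B i0 : upd B i0 (B i0) = B.
Proof. by apply/ffunP => i; rewrite !ffunE; case: eqVneq => // ->. Qed.

Lemma upd_Bv B i0 (S : {set 'I_r}) : B \in Bvecs n r p -> #|S| = p -> upd B i0 S \in Bvecs n r p.
Proof.
rewrite !inE => /forallP H cS; apply/forallP => i; rewrite ffunE.
by case: (i == i0); [rewrite cS | apply: H].
Qed.

Lemma perv (w : {ffun Pos -> V}) (i0 : 'I_n) (j0 : 'I_r) : injective w ->
  `|\sum_(B in Bvecs n r p) sgn R p q (Tset w B) (w (i0, j0)) *
        f (w (i0, j0)) (Tset w B :&: nbhd e (w (i0, j0)))|
  <= \sum_(B in Bvecs n r p | j0 \in B i0) \sum_(u | u \notin B i0)
        c (w (i0, j0)) (w (i0, u)).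
Proof.
move=> wi.
set v := w (i0, j0).
pose g B := f v (Tset w B :&: nbhd e v).
have cardB : forall B, B \in Bvecs n r p -> #|B i0| = p.
  by move=> B; rewrite inE => /forallP /(_ i0) /eqP.
have cardC : forall B, B \in Bvecs n r p -> #|[pred u | u \notin B i0]| = q.
  move=> B /cardB cB; have := cardsC (B i0); rewrite card_ord cB => h.
  have -> : #|[pred u | u \notin B i0]| = #|~: B i0|.
    by apply: eq_card => u; rewrite !inE.
  by apply/eqP; rewrite -(eqn_add2l p) h.
rewrite (bigID (fun B : {ffun 'I_n -> {set 'I_r}} => j0 \in B i0)) /=.
pose Xp := fun x : {ffun 'I_n -> {set 'I_r}} * 'I_r =>
  (x.1 \in Bvecs n r p) && (j0 \in x.1 i0) && (x.2 \notin x.1 i0).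
pose Yp := fun x : {ffun 'I_n -> {set 'I_r}} * 'I_r =>
  (x.1 \in Bvecs n r p) && (j0 \notin x.1 i0) && (x.2 \in x.1 i0).
have E1 : \sum_(B in Bvecs n r p | j0 \in B i0)
    sgn R p q (Tset w B) v * f v (Tset w B :&: nbhd e v)
   = \sum_(x | Xp x) g x.1.
  transitivity (\sum_(B in Bvecs n r p | j0 \in B i0) \sum_(u | u \notin B i0) g B);
    last by rewrite pair_big_dep.
  apply: eq_bigr => B /andP [BB jB].
  by rewrite /sgn memT // jB sumr_const cardC // mulr_natl.
have E2 : \sum_(B in Bvecs n r p | j0 \notin B i0)
    sgn R p q (Tset w B) v * f v (Tset w B :&: nbhd e v)
   = - \sum_(x | Yp x) g x.1.
  transitivity (- \sum_(B in Bvecs n r p | j0 \notin B i0) \sum_(u | u \in B i0) g B);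
    last by rewrite pair_big_dep.
  rewrite -sumrN; apply: eq_bigr => B /andP [BB jB].
  rewrite /sgn memT // (negbTE jB) sumr_const mulNr mulr_natl.
  by rewrite [in RHS](cardB _ BB).
pose phi := fun x : {ffun 'I_n -> {set 'I_r}} * 'I_r =>
  (upd x.1 i0 (x.1 i0 :\ j0 :|: [set x.2]), x.2).
pose psi := fun x : {ffun 'I_n -> {set 'I_r}} * 'I_r =>
  (upd x.1 i0 (x.1 i0 :\ x.2 :|: [set j0]), x.2).
have L1 : forall x, Xp x -> Yp (phi x) /\ psi (phi x) = x.
  move=> [B u]; rewrite /Xp /= => /andP [/andP [BB jB] uB].
  have [h1 h2 h3] := swap_mem jB uB.
  rewrite /Yp /psi /= upd_same upd_upd h1 h2 upd_Bv ?h3 ?cardB //.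
  by rewrite swapK // upd_id.
have L2 : forall y, Yp y -> Xp (psi y) /\ phi (psi y) = y.
  move=> [B u]; rewrite /Yp /= => /andP [/andP [BB jB] uB].
  have [h1 h2 h3] := swap_mem uB jB.
  rewrite /Xp /phi /= upd_same upd_upd h1 h2 upd_Bv ?h3 ?cardB //.
  by rewrite swapK // upd_id.
have E3 : \sum_(x | Yp x) g x.1 = \sum_(x | Xp x) g (phi x).1.
  rewrite (reindex_onto phi psi); last by move=> y /L2 [].
  apply: eq_bigl => x; apply/andP/idP => [[/L2 [H _] /eqP E]|Hx].
    by rewrite -E.
  by have [-> ->] := L1 _ Hx; rewrite eqxx.
rewrite E1 E2 E3 -sumrB.
rewrite pair_big_dep /=.
apply: le_trans (ler_norm_sum _ _ _) _.
apply: ler_sum => [[B u]] /andP [/andP [BB jB] uB].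
exact: lipstep.
Qed.

Definition D (w : {ffun Pos -> V}) : R :=
  \sum_(a : Pos) \sum_(B in Bvecs n r p | a.2 \in B a.1)
     \sum_(u | u \notin B a.1) c (w a) (w (a.1, u)).

Lemma boundA (w : {ffun Pos -> V}) : injective w ->
  `|EB e f n p q w| <= (#|Bvecs n r p|%:R)^-1 * ((p * q * n)%N%:R)^-1 * D w.
Proof.
move=> wi; rewrite /EB /xi -mulr_sumr exchange_big /=.
rewrite !normrM !normfV !normr_nat mulrA.
rewrite ler_wpM2l ?mulr_ge0 ?invr_ge0 ?ler0n //.
apply: le_trans (ler_norm_sum _ _ _) _.
rewrite (reindex w) /=; last exact/onW_bij/bijw.
rewrite /D; apply: ler_sum => [[i0 j0]] _ /=.
exact: perv.
Qed.

Definition S (a b : Pos) : R := \sum_(w in partitions V n r) c (w a) (w b).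

Lemma perm_pair (a b a' b' : Pos) : a != b -> a' != b' ->
  exists s : {perm Pos}, s a' = a /\ s b' = b.
Proof.
move=> ab ab'.
set b2 := tperm a' a b'.
have b2a : b2 != a.
  by rewrite /b2 -{2}(tpermL a' a) (inj_eq perm_inj) eq_sym.
exists (tperm a' a * tperm b2 b)%g; rewrite !permM tpermL; split.
  by rewrite tpermD // eq_sym.
by rewrite -/b2 tpermL.
Qed.

Lemma Sconst a b a' b' : a != b -> a' != b' -> S a b = S a' b'.
Proof.
move=> ab ab'; case: (perm_pair _ _ _ _ ab ab') => s [sa sb].
pose h (w : {ffun Pos -> V}) := [ffun x => w (s x)].
have hinj : injective h.
  move=> w1 w2 /ffunP E; apply/ffunP => x.
  by have := E ((s^-1)%g x); rewrite !ffunE permKV.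
rewrite /S [RHS](reindex_inj hinj) /=.
apply: eq_big => w; last by move=> _; rewrite !ffunE sa sb.
rewrite !inE; apply/idP/idP => /injectiveP H; apply/injectiveP => x y.
  by rewrite !ffunE => /H /perm_inj.
move=> E; have : h w ((s^-1)%g x) = h w ((s^-1)%g y) by rewrite !ffunE !permKV.
by move/H/(congr1 s); rewrite !permKV.
Qed.

Lemma cardC_B (B : {ffun 'I_n -> {set 'I_r}}) i0 : B \in Bvecs n r p ->
  #|[pred u | u \notin B i0]| = q.
Proof.
rewrite inE => /forallP /(_ i0) /eqP cB; have := cardsC (B i0); rewrite card_ord cB => h.
have -> : #|[pred u | u \notin B i0]| = #|~: B i0|.
  by apply: eq_card => u; rewrite !inE.
by apply/eqP; rewrite -(eqn_add2l p) h.
Qed.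

Lemma boundB a0 b0 : a0 != b0 ->
  \sum_(w in partitions V n r) D w = (n * #|Bvecs n r p| * p * q)%N%:R * S a0 b0.
Proof.
move=> ab0.
transitivity (\sum_(a : Pos) \sum_(B in Bvecs n r p | a.2 \in B a.1)
     \sum_(u | u \notin B a.1) S a0 b0).
  rewrite /D exchange_big; apply: eq_bigr => a _.
  rewrite exchange_big; apply: eq_bigr => B /andP [BB jB].
  rewrite exchange_big; apply: eq_bigr => u uB.
  transitivity (S a (a.1, u)); first by [].
  apply: Sconst => //.
  case: a jB uB => i j /= jB uB; apply/negP => /eqP [E].
  by rewrite -E jB in uB.
transitivity (\sum_(i : 'I_n) \sum_(j : 'I_r) \sum_(B in Bvecs n r p | j \in B i)
     S a0 b0 *+ q).
  rewrite pair_big; apply: eq_bigr => [[i j]] _ /=.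
  by apply: eq_bigr => B /andP [BB _]; rewrite sumr_const cardC_B.
transitivity (\sum_(i : 'I_n) \sum_(B in Bvecs n r p) S a0 b0 *+ q *+ p).
  apply: eq_bigr => i _.
  rewrite -(exchange_big_dep xpredT) //=; apply: eq_bigr => B.
  rewrite inE => /forallP /(_ i) /eqP cB.
  by rewrite (eq_bigl (mem (B i))) // sumr_const cB.
under eq_bigr do rewrite sumr_const.
rewrite sumr_const card_ord -!mulrnA mulr_natl; congr (_ *+ _).
lia.
Qed.

Lemma boundC a0 b0 : a0 != b0 ->
  ((r * n) * ((r * n) - 1))%N%:R * S a0 b0
  = #|partitions V n r|%:R * \sum_x K x.
Proof.
move=> ab0.
have cP : #|{: Pos}| = (r * n)%N by rewrite card_prod !card_ord mulnC.
transitivity (\sum_(a : Pos) \sum_(b | b != a) S a b).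
  transitivity (\sum_(a : Pos) \sum_(b | b != a) S a0 b0).
    have sN : forall a : Pos, \sum_(b | b != a) S a0 b0 = S a0 b0 *+ (r * n).-1.
      move=> a; rewrite (@eq_bigl _ _ _ _ _ _ (predC1 a)); last by move=> b.
      by rewrite sumr_const cardC1 cP.
    under eq_bigr do rewrite sN.
    by rewrite sumr_const cP mulr_natl -mulrnA subn1 mulnC.
  apply: eq_bigr => a _; apply: eq_bigr => b ba.
  by apply: Sconst; rewrite // eq_sym.
rewrite /S.
under eq_bigr do rewrite exchange_big.
rewrite exchange_big /= mulr_natl -sumr_const.
apply: eq_bigr => w; rewrite inE => /injectiveP wi.
have bw := bijw _ wi.
transitivity (\sum_(a : Pos) \sum_(b : Pos) c (w a) (w b)).
  apply: eq_bigr => a _.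
  by rewrite [RHS](bigD1 a) //= (c_xx (w a)) add0r.
rewrite [RHS](reindex w) /=; last exact/onW_bij.
apply: eq_bigr => a _.
by rewrite -(sum_c (w a)) [RHS](reindex w) //; exact/onW_bij.
Qed.

End Main.

Theorem mainTheorem12 (R : realFieldType) (V : finType) (n p q : nat)
  (e : rel V) (f : V -> {set V} -> R) (K : V -> R) :
  (0 < n)%N -> (0 < p)%N -> (0 < q)%N ->
  #|V| = ((p + q) * n)%N ->
  simple_graph e -> no_isolated e ->
  (forall v, f v set0 = 0) ->
  (forall v, 0 < K v) ->
  (forall v, lipschitz e (f v) (K v) v) ->
  let r := (p + q)%N in
  let Kbar := ((r * n)%N%:R)^-1 * \sum_(v : V) K v in
  ((#|partitions V n r|)%:R)^-1 *
    \sum_(w in partitions V n r) `|EB e f n p q w|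
  <= Kbar / ((r * n)%N - 1)%N%:R.
Proof.
intros n0 p0 q0 HV Hs Hi f0 HK Hl; cbv zeta; set r := (p + q)%N; set Kbar := (((r * n)%N%:R)^-1 * _).
have r2 : (1 < r)%N by rewrite /r; lia.
pose i : 'I_n := Ordinal n0.
pose a0 : ('I_n * 'I_r)%type := (i, Ordinal (ltnW r2)).
pose b0 : ('I_n * 'I_r)%type := (i, Ordinal r2).
have ab : a0 != b0 by rewrite /a0 /b0 xpair_eqE eqxx.
have HC := @boundC _ _ _ _ _ _ _ Hs Hi HV _ _ ab.
have HB := @boundB _ _ _ _ _ e K HV _ _ ab.
set S0 := S R V n p q e K a0 b0 in HC HB.
have S0ge : 0 <= S0 by apply: sumr_ge0 => w _; apply: (@c_ge0 _ _ _ _ HK).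
have sK : 0 <= \sum_v K v by apply: sumr_ge0 => v _; apply: ltW.
have Kge : 0 <= Kbar by rewrite /Kbar mulr_ge0 ?invr_ge0 ?ler0n.
have RHSge : 0 <= Kbar / ((r * n)%N - 1)%N%:R by rewrite divr_ge0 ?ler0n.
have step1 : \sum_(w in partitions V n r) `|EB e f n p q w| <= S0.
  apply: le_trans (_ : (#|Bvecs n r p|%:R)^-1 / (p * q * n)%N%:R *
      \sum_(w in partitions V n r) D R V n p q e K w <= _).
    rewrite mulr_sumr; apply: ler_sum => w; rewrite inE => /injectiveP wi.
    exact: (@boundA _ _ _ _ _ _ _ _ Hs HK Hl HV).
  rewrite HB.
  case: (eqVneq #|Bvecs n r p| 0%N) => [->|Bn0].
    by rewrite invr0 !mul0r.
  have h1 : (#|Bvecs n r p|%:R : R) != 0 by rewrite pnatr_eq0.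
  have h2 : (p%:R : R) != 0 by rewrite pnatr_eq0 -lt0n.
  have h3 : (q%:R : R) != 0 by rewrite pnatr_eq0 -lt0n.
  have h4 : (n%:R : R) != 0 by rewrite pnatr_eq0 -lt0n.
  rewrite !natrM [X in X <= _](_ : _ = S0) //.
  by field; rewrite h1 h2 h3 h4.
apply: le_trans (_ : (#|partitions V n r|%:R)^-1 * S0 <= _).
  by rewrite ler_wpM2l ?invr_ge0 ?ler0n.
case: (eqVneq #|partitions V n r| 0%N) => [->|P0].
  by rewrite invr0 mul0r.
have hP : (#|partitions V n r|%:R : R) != 0 by rewrite pnatr_eq0.
have hN : ((r * n)%N%:R : R) != 0 by rewrite pnatr_eq0 muln_eq0 negb_or -!lt0n; apply/andP; split; lia.
have hN1 : (((r * n)%N - 1)%N%:R : R) != 0 by rewrite pnatr_eq0 -lt0n subn_gt0; nia.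
have -> : S0 = #|partitions V n r|%:R * (\sum_v K v) /
                ((r * n)%N%:R * ((r * n)%N - 1)%N%:R).
  apply: (@mulfI _ ((r * n)%N%:R * ((r * n)%N - 1)%N%:R)).
    by rewrite mulf_neq0.
  rewrite -[in LHS]natrM HC.
  by rewrite [RHS]mulrC divfK ?mulf_neq0.
rewrite le_eqVlt; apply/orP; left; apply/eqP.
rewrite /Kbar; field.
by rewrite hP hN1 !pnatr_eq0 -!lt0n n0 /r; apply/andP; split => //; lia.
Qed.
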